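(* Under the standing assumptions of the context, for every integer $\ell\ge1$ the limits $\lambda_\ell(x,\infty,1/2)$ and $\Lambda_\ell(x,\infty,1/2)$ exist and \[ \lambda_\ell(x,\infty,1/2)=d(\mathcal K_\ell),\qquad \Lambda_\ell(x,\infty,1/2)=\sum_{l=\ell}^\infty d(\mathcal K_l)>0; \] moreover, $d(\mathcal K_\ell)>0$ for infinitely many $\ell$.
   Context: Standing assumptions: $A=\{0,1\}$, $\Sigma=A^{\mathbb N_0}$ with metric $\rho(y,z)=2^{-\min\{i\ge0:\,y_i\ne z_i\}}$ ($y\ne z$) and shift $\sigma$. $\zeta:A\to A^*$ is a binary substitution of constant length $q\ge2$, primitive, aperiodic (its subshift $X_\zeta$ contains a non-$\sigma$-periodic sequence), with $\zeta(0)$ starting with $0$; $x=\lim_k\zeta^k(0)$ its fixed point starting with $0$. For $n\in\mathbb N\cup\{\infty\}$, $n\ge2$, the recurrence plot $R(x,n,1/2)$ has indices $0\le i,j<n$ and entry $1$ iff $x_i=x_j$. A line of length $\ell$: $(i,j,\ell)$ with $0\le i,j\le n-\ell$, $i\ne j$, entries $(i+k,j+k)=1$ for $0\le k<\ell$, entry $(i-1,j-1)=0$ if $\min\{i,j\}>0$, entry $(i+\ell,j+\ell)=0$ if $\max\{i,j\}<n-\ell$; for $n=\infty$ it is inner if $\min\{i,j\}>0$. For finite $n$: $N_\ell$ = number of all lines of length exactly $\ell$, $\lambda_\ell(x,n,1/2)=N_\ell/(n^2-n)$, $\Lambda_\ell=\sum_{l\ge\ell}\lambda_l$; values at $n=\infty$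 are limits as $n\to\infty$. $\mathcal K_l=\{(i,j)\in\mathbb N^2:(i,j,l)\text{ inner line in }R(x,\infty,1/2)\}$; $d(M)=\lim_n n^{-2}\#(M\cap[0,n)^2)$, known to exist for $M=\mathcal K_l$. *)

(* Defs.v *)
From mathcomp Require Import all_boot.
From Stdlib Require Import Reals.
From Coquelicot Require Import Coquelicot.

Set Implicit Arguments.
Unset Strict Implicit.
Unset Printing Implicit Defensive.
Local Open Scope nat_scope.

(* Alphabet A = {0,1} is encoded as bool with 0 = false, 1 = true. *)
Definition subst := bool -> seq bool.

Definition apply_subst (z : subst) (w : seq bool) : seq bool := flatten (map z w).

Definition iter_subst (z : subst) (k : nat) (w : seq bool) : seq bool :=
  iter k (apply_subst z) w.

Definition constant_length (z : subst) (q : nat) : Prop := forall a, size (z a) = q.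

Definition subst_primitive (z : subst) : Prop :=
  exists k : nat, (0 < k)%N /\ forall a b : bool, b \in iter_subst z k [:: a].

Definition in_language (z : subst) (w : seq bool) : Prop :=
  exists (k : nat) (a : bool), infix w (iter_subst z k [:: a]).

Definition in_subshift (z : subst) (y : nat -> bool) : Prop :=
  forall i n : nat, in_language z (mkseq (fun t => y (i + t)%N) n).

Definition sigma_periodic (y : nat -> bool) : Prop :=
  exists p : nat, (0 < p)%N /\ forall t, y (t + p)%N = y t.

Definition subst_aperiodic (z : subst) : Prop :=
  exists y : nat -> bool, in_subshift z y /\ ~ sigma_periodic y.

Definition is_fixed_point_limit (z : subst) (x : nat -> bool) : Prop :=
  forall i, exists K, forall k, (K <= k)%N ->
    (i < size (iter_subst z k [:: false]))%N /\
    nth false (iter_subst z k [:: false]) i = x i.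

(* entry (i,j) of the recurrence plot R(x, n, 1/2) is 1 iff x_i = x_j *)
Definition rp (x : nat -> bool) (i j : nat) : bool := x i == x j.

Definition is_line (x : nat -> bool) (n i j l : nat) : bool :=
  [&& (i <= n - l)%N, (j <= n - l)%N, l <= n, i != j,
      seq.all (fun k => rp x (i + k) (j + k)) (seq.iota 0 l),
      implb (0 < minn i j)%N (~~ rp x i.-1 j.-1) &
      implb (maxn i j < n - l)%N (~~ rp x (i + l) (j + l))].

Definition N_lines (x : nat -> bool) (n l : nat) : nat :=
  \sum_(i < n) \sum_(j < n) is_line x n i j l.

Definition rqa_lambda (x : nat -> bool) (n l : nat) : R :=
  INR (N_lines x n l) / INR (n * n - n).

(* Lambda_l = sum_{l' >= l} lambda_{l'}; lines have length <= n, so the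
   sum over l' = l, ..., l + n contains all nonzero terms. *)
Definition rqa_Lambda (x : nat -> bool) (n l : nat) : R :=
  sum_n (fun k => rqa_lambda x n (l + k)) n.

Definition in_K (x : nat -> bool) (l i j : nat) : bool :=
  [&& (0 < i)%N, (0 < j)%N, i != j,
      seq.all (fun k => rp x (i + k) (j + k)) (seq.iota 0 l),
      ~~ rp x i.-1 j.-1 &
      ~~ rp x (i + l) (j + l)].

Definition density_K (x : nat -> bool) (l n : nat) : R :=
  INR (\sum_(i < n) \sum_(j < n) in_K x l i j) / INR (n * n).

(* Main.v *)
Require Import Defs.
From mathcomp Require Import all_boot.
From Stdlib Require Import Reals.
From Coquelicot Require Import Coquelicot.
From mathcomp Require Import zify.
From Stdlib Require Import Lra Lia Classical.
Local Open Scope nat_scope.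
Set Implicit Arguments.
Unset Strict Implicit.

Section Subst.
Variables (z : subst) (q : nat).
Hypothesis Hcl : constant_length z q.

Lemma apply_cat s1 s2 : apply_subst z (s1 ++ s2) = apply_subst z s1 ++ apply_subst z s2.
Proof. by rewrite /apply_subst map_cat flatten_cat. Qed.

Lemma iter_cat k s1 s2 : iter_subst z k (s1 ++ s2) = iter_subst z k s1 ++ iter_subst z k s2.
Proof. elim: k => [//|k IH]; by rewrite /iter_subst !iterS -!/(iter_subst _ _ _) IH apply_cat. Qed.

Lemma size_apply s : size (apply_subst z s) = q * size s.
Proof.
elim: s => [|c s IH]; first by rewrite muln0.
by rewrite -cat1s apply_cat size_cat IH /apply_subst /= cats0 Hcl mulnS.
Qed.

Lemma size_iter k s : size (iter_subst z k s) = expn q k * size s.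
Proof.
elim: k => [|k IH]; first by rewrite expn0 mul1n.
by rewrite /iter_subst iterS -/(iter_subst _ _ _) size_apply IH expnS mulnA.
Qed.

Lemma iterD_subst k j s : iter_subst z (k + j) s = iter_subst z k (iter_subst z j s).
Proof. by rewrite /iter_subst iterD. Qed.

Lemma nth_iter k s t r : t < size s -> r < expn q k ->
  nth false (iter_subst z k s) (t * expn q k + r) = nth false (iter_subst z k [:: nth false s t]) r.
Proof.
elim: s t => [//|c s IH] [|t] /= Ht Hr.
  by rewrite -cat1s iter_cat nth_cat size_iter muln1 mul0n add0n Hr.
rewrite -cat1s iter_cat nth_cat size_iter muln1 mulSn -addnA.
rewrite ltnNge leq_addr /= addKn IH //.
Qed.

Lemma iter_split k j b s r : s < expn q j -> r < expn q k ->
  nth false (iter_subst z (k + j) [:: b]) (s * expn q k + r) =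
  nth false (iter_subst z k [:: nth false (iter_subst z j [:: b]) s]) r.
Proof.
move=> Hs Hr; rewrite iterD_subst nth_iter //.
by rewrite size_iter muln1.
Qed.

Lemma BD x : is_fixed_point_limit z x -> forall k t r, r < expn q k ->
  x (t * expn q k + r) = nth false (iter_subst z k [:: x t]) r.
Proof.
move=> Hfp k t r Hr.
have [K1 H1] := Hfp t.
have [K2 H2] := Hfp (t * expn q k + r).
have [_ <-] := H2 (k + (K1 + K2)) (leq_trans (leq_addl _ _) (leq_addl _ _)).
have [Ht <-] := H1 (K1 + K2) (leq_addr _ _).
by rewrite iterD_subst nth_iter.
Qed.

End Subst.

Definition wins (F : nat -> bool) L i := mkseq (fun u => F (i + u)) L.
Definition cntF (F : nat -> bool) (w : seq bool) n := \sum_(0 <= i < n) (wins F (size w) i == w).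

Lemma sum_blocks (a : nat -> nat) M B :
  \sum_(0 <= i < M * B) a i = \sum_(0 <= s < M) \sum_(0 <= r < B) a (s * B + r).
Proof.
elim: M => [|M IH]; first by rewrite mul0n !big_geq.
rewrite big_nat_recr //= -IH mulSn addnC (@big_cat_nat _ _ _ (M * B)) //= ?leq_addr //.
congr (_ + _).
rewrite -{1}(add0n (M * B)) big_addn addKn.
by apply: eq_bigr => i _; rewrite addnC.
Qed.

Lemma sum_near (a b : nat -> nat) B L :
  (forall r, r + L <= B -> a r = b r) -> (forall r, a r <= 1) ->
  \sum_(0 <= r < B) a r <= \sum_(0 <= r < B) b r + (L - 1).
Proof.
move=> Hab Ha1.
case: (leqP B (L - 1)) => HB.
  apply: leq_trans (leq_addl _ _).
  apply: leq_trans HB.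
  apply: leq_trans (_ : \sum_(0 <= r < B) 1 <= B).
    by apply: leq_sum => i _.
  by rewrite sum_nat_const_nat muln1 subn0.
have HBL : B - (L - 1) <= B by rewrite leq_subr.
rewrite (@big_cat_nat _ _ _ (B - (L - 1)) 0 B) // (@big_cat_nat _ _ _ (B - (L - 1)) 0 B) //=.
rewrite -addnA leq_add //.
  rewrite leq_eqVlt; apply/orP; left; apply/eqP.
  rewrite !big_nat; apply: eq_bigr => i /andP [_ Hi]; apply: Hab.
  move: Hi; clear -HB; case: L HB => [|L] /=; first by rewrite subn0 => _ /ltnW; rewrite addn0.
  by rewrite subSS subn0 => _ Hi; lia.
apply: leq_trans (leq_addl _ _).
apply: leq_trans (_ : \sum_(B - (L-1) <= r < B) 1 <= _).
  by apply: leq_sum => i _.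
by rewrite sum_nat_const_nat muln1 subKn // ltnW.
Qed.

Section Block.
Variables (F G : nat -> bool) (Z : bool -> nat -> bool) (B M : nat) (w : seq bool).
Hypothesis HFZ : forall s r, s < M -> r < B -> F (s * B + r) = Z (G s) r.
Let L := size w.
Definition gZ c := \sum_(0 <= r < B) (wins (Z c) L r == w).

Lemma block_eq s r : s < M -> r + L <= B -> wins F L (s * B + r) = wins (Z (G s)) L r.
Proof.
move=> Hs HrL; apply: (@eq_from_nth _ false) => [|u]; rewrite !size_mkseq // => Hu.
rewrite !nth_mkseq // -addnA HFZ //; rewrite /L in Hu HrL; lia.
Qed.

Lemma block_le1 :
  cntF F w (M * B) <= \sum_(0 <= s < M) gZ (G s) + M * (L - 1).
Proof.
rewrite /cntF -/L sum_blocks.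
have -> : M * (L - 1) = \sum_(0 <= s < M) (L - 1) by rewrite sum_nat_const_nat subn0.
rewrite -big_split /=.
rewrite !big_nat; apply: leq_sum => s /andP [_ Hs].
apply: sum_near => [r Hr|r]; last by case: (_ == _).
by rewrite block_eq.
Qed.

Lemma block_le2 :
  \sum_(0 <= s < M) gZ (G s) <= cntF F w (M * B) + M * (L - 1).
Proof.
rewrite /cntF -/L sum_blocks.
have -> : M * (L - 1) = \sum_(0 <= s < M) (L - 1) by rewrite sum_nat_const_nat subn0.
rewrite -big_split /=.
rewrite !big_nat; apply: leq_sum => s /andP [_ Hs].
apply: sum_near => [r Hr|r]; last by case: (_ == _).
by rewrite block_eq.
Qed.
End Block.

Lemma sum_bool_ge1 (f : nat -> bool) n r : r < n -> f r -> 1 <= \sum_(0 <= i < n) f i.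
Proof.
elim: n => [//|n IH] Hr Hf.
rewrite big_nat_recr //=.
case: (ltngtP r n) => [Hrn||Hrn]; last by rewrite -Hrn Hf addn1.
- by apply: leq_trans (IH Hrn Hf) (leq_addr _ _).
- by move=> H; move: Hr; rewrite ltnS leqNgt H.
Qed.

Lemma sum_bool_le (f : nat -> bool) n : \sum_(0 <= i < n) f i <= n.
Proof.
apply: leq_trans (_ : \sum_(0 <= i < n) 1 <= n).
  by apply: leq_sum => i _; case: (f i).
by rewrite sum_nat_const_nat subn0 muln1.
Qed.

Lemma sum_bool_compl (f : nat -> bool) n : \sum_(0 <= i < n) (~~ f i) + \sum_(0 <= i < n) f i = n.
Proof.
rewrite -big_split /=.
rewrite (eq_bigr (fun _ => 1)); first by rewrite sum_nat_const_nat subn0 muln1.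
by move=> i _; case: (f i).
Qed.

Lemma sum_split_bool (h : bool -> nat) (G : nat -> bool) M :
  \sum_(0 <= s < M) h (G s) = h false * \sum_(0 <= s < M) (~~ G s) + h true * \sum_(0 <= s < M) G s.
Proof.
rewrite !big_distrr -big_split /=; apply: eq_bigr => s _.
by case: (G s); rewrite /= ?muln0 ?muln1 ?addn0.
Qed.

Section Freq.
Variables (z : subst) (q : nat) (x : nat -> bool).
Hypothesis Hq : 2 <= q.
Hypothesis Hcl : constant_length z q.
Hypothesis Hfp : is_fixed_point_limit z x.

Definition Zk k c r := nth false (iter_subst z k [:: c]) r.
Definition gk k w c := gZ (Zk k) (expn q k) w c.
Definition ak k b := gk k [:: false] b.

Lemma ak_E k b : ak k b = \sum_(0 <= r < expn q k) (~~ Zk k b r).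
Proof. by apply: eq_bigr => r _; rewrite /wins /mkseq /= addn0; case: (Zk k b r). Qed.

Lemma gk_le k w c : gk k w c <= expn q k.
Proof.
apply: leq_trans (_ : \sum_(0 <= i < expn q k) 1 <= _).
  by apply: leq_sum => i _; case: (_ == _).
by rewrite sum_nat_const_nat subn0 muln1.
Qed.

Lemma gk_rec_hyp k j b : forall s r, s < expn q j -> r < expn q k ->
  Zk (k + j) b (s * expn q k + r) = Zk k (Zk j b s) r.
Proof. by move=> s r Hs Hr; rewrite /Zk iter_split. Qed.

Lemma gk_cnt k j w b : gk (k + j) w b = cntF (Zk (k + j) b) w (expn q j * expn q k).
Proof. by rewrite /gk /gZ /cntF expnD mulnC. Qed.

Lemma gk_rec1 k j w b :
  gk (k + j) w b <= gk k w false * ak j b + gk k w true * (expn q j - ak j b) + expn q j * (size w - 1).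
Proof.
rewrite gk_cnt.
have := block_le1 (G := Zk j b) w (@gk_rec_hyp k j b).
rewrite /gk (sum_split_bool (fun c => gZ (Zk k) (expn q k) w c)) ak_E.
have E : expn q j - \sum_(0 <= r < expn q j) ~~ Zk j b r = \sum_(0 <= r < expn q j) Zk j b r.
  by rewrite -{1}(sum_bool_compl (Zk j b) (expn q j)) addKn.
by rewrite E.
Qed.

Lemma gk_rec2 k j w b :
  gk k w false * ak j b + gk k w true * (expn q j - ak j b) <= gk (k + j) w b + expn q j * (size w - 1).
Proof.
rewrite gk_cnt.
have := block_le2 (G := Zk j b) w (@gk_rec_hyp k j b).
rewrite /gk (sum_split_bool (fun c => gZ (Zk k) (expn q k) w c)) ak_E.
have E : expn q j - \sum_(0 <= r < expn q j) ~~ Zk j b r = \sum_(0 <= r < expn q j) Zk j b r.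
  by rewrite -{1}(sum_bool_compl (Zk j b) (expn q j)) addKn.
by rewrite E.
Qed.

Lemma x_hypM k M : forall s r, s < M -> r < expn q k -> x (s * expn q k + r) = Zk k (x s) r.
Proof. by move=> s r _ Hr; rewrite /Zk (BD Hcl Hfp). Qed.

Lemma x_block1 k M w :
  cntF x w (M * expn q k) <= \sum_(0 <= s < M) gk k w (x s) + M * (size w - 1).
Proof. exact: block_le1 w (@x_hypM k M). Qed.

Lemma x_block2 k M w :
  \sum_(0 <= s < M) gk k w (x s) <= cntF x w (M * expn q k) + M * (size w - 1).
Proof. exact: block_le2 w (@x_hypM k M). Qed.

End Freq.

Lemma leR (m n : nat) : m <= n -> (INR m <= INR n)%R.
Proof. by move=> /leP; apply: le_INR. Qed.

Lemma nat_close X Y E : X <= Y + E -> Y <= X + E -> (Rabs (INR X - INR Y) <= INR E)%R.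
Proof.
move=> /leR H1 /leR H2; rewrite plus_INR in H1; rewrite plus_INR in H2.
apply: Rabs_le; lra.
Qed.

Lemma INR_subn m n : n <= m -> INR (m - n) = (INR m - INR n)%R.
Proof. by move=> /leP H; rewrite minus_INR. Qed.

Lemma INR_muln m n : INR (m * n) = (INR m * INR n)%R.
Proof. exact: mult_INR. Qed.

Lemma INR_addn m n : INR (m + n) = (INR m + INR n)%R.
Proof. exact: plus_INR. Qed.

Section FreqR.
Variables (z : subst) (q : nat) (x : nat -> bool).
Hypothesis Hq : 2 <= q.
Hypothesis Hcl : constant_length z q.
Hypothesis Hfp : is_fixed_point_limit z x.

Local Open Scope R_scope.

Definition Qk k := INR (expn q k).

Lemma Qk_pos k : 0 < Qk k.
Proof. apply: lt_0_INR; apply/ltP; rewrite expn_gt0; apply/orP; left; lia. Qed.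

Lemma QkD k j : Qk (k + j) = Qk k * Qk j.
Proof. by rewrite /Qk expnD INR_muln. Qed.

Lemma Qk_ge k : INR k < Qk k.
Proof. apply: lt_INR; apply/ltP; apply: ltn_expl; lia. Qed.

Definition rA k := (INR (ak z q k false) - INR (ak z q k true)) / Qk k.

Lemma ak_exact k j b :
  INR (ak z q (k + j) b) = INR (ak z q k false) * INR (ak z q j b) + INR (ak z q k true) * (Qk j - INR (ak z q j b)).
Proof.
have H1 := gk_rec1 Hcl k j [:: false] b.
have H2 := gk_rec2 Hcl k j [:: false] b.
rewrite /= subnn muln0 !addn0 in H1 H2.
have -> : ak z q (k + j) b = (ak z q k false * ak z q j b + ak z q k true * (expn q j - ak z q j b))%nat.
  by apply/eqP; rewrite eqn_leq H1 H2.
rewrite INR_addn !INR_muln INR_subn ?gk_le //.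
Qed.

Lemma rA_mul k j : rA (k + j) = rA k * rA j.
Proof.
rewrite /rA QkD !ak_exact.
have := Qk_pos k; have := Qk_pos j => Hj Hk.
field; lra.
Qed.


Lemma rA0 : rA 0 = 1.
Proof. by rewrite /rA /Qk expn0 /ak /gk /gZ /wins /Zk expn0 !big_nat1 /= /iter_subst /=; lra. Qed.

Lemma rA_pow K n : rA (n * K) = rA K ^ n.
Proof.
elim: n => [|n IH]; first by rewrite mul0n rA0.
by rewrite mulSn rA_mul IH.
Qed.

Lemma ak_bounds K b : subst_primitive z -> (forall a c, c \in iter_subst z K [:: a]) ->
  1 <= INR (ak z q K b) <= Qk K - 1.
Proof.
move=> _ Hall.
have Hs : size (iter_subst z K [:: b]) = expn q K by rewrite (size_iter Hcl) muln1.
have [r0 Hr0 E0] := nthP false (Hall b false).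
have [r1 Hr1 E1] := nthP false (Hall b true).
rewrite Hs in Hr0 Hr1.
have Hc := sum_bool_compl (Zk z K b) (expn q K).
have G0 : (1 <= ak z q K b)%nat.
  rewrite ak_E; apply: (sum_bool_ge1 Hr0); by rewrite /Zk E0.
have G1 : (1 <= \sum_(0 <= i < expn q K) Zk z K b i)%nat.
  apply: (sum_bool_ge1 Hr1); by rewrite /Zk E1.
have G2 : (ak z q K b + 1 <= expn q K)%nat.
  by rewrite ak_E -{2}Hc leq_add2l.
split; first by apply: (leR G0).
have := leR G2; rewrite INR_addn /Qk /=; lra.
Qed.

Lemma rA_lt1 : subst_primitive z -> exists K, Rabs (rA K) < 1.
Proof.
move=> Hp; have [K [_ Hall]] := Hp.
exists K.
have H0 := ak_bounds false Hp Hall.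
have H1 := ak_bounds true Hp Hall.
have HQ := Qk_pos K.
rewrite /rA Rabs_div; last lra.
rewrite (Rabs_pos_eq (Qk K)); last lra.
apply/Rlt_div_l => //; rewrite Rmult_1_l.
apply: Rabs_def1; lra.
Qed.

Lemma rA_small : subst_primitive z -> forall eps, 0 < eps -> exists j, Rabs (rA j) < eps.
Proof.
move=> Hp eps He.
have [K HK] := rA_lt1 Hp.
have [N HN] := pow_lt_1_zero _ HK _ He.
exists (N * K)%nat; rewrite rA_pow -RPow_abs.
have := HN N (Nat.le_refl N); by rewrite -RPow_abs.
Qed.

Lemma Qk_large C eps : 0 < eps -> exists k0, forall k, (k0 <= k)%nat -> C / Qk k < eps.
Proof.
move=> He.
have [n [_ Hn]] := nfloor_ex (Rmax 0 (C / eps)) (Rmax_l _ _).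
exists n.+1 => k Hk.
have Hkn := Qk_ge k.
have Hnk : INR n.+1 <= INR k by apply: leR.
rewrite S_INR in Hnk.
have HQ := Qk_pos k.
apply/Rlt_div_l => //.
have : C / eps < Qk k by have := Rmax_r 0 (C / eps); lra.
move/(Rlt_div_l _ _ _ He); lra.
Qed.
End FreqR.

Section FreqR2.
Variables (z : subst) (q : nat) (x : nat -> bool).
Hypothesis Hq : 2 <= q.
Hypothesis Hcl : constant_length z q.
Hypothesis Hfp : is_fixed_point_limit z x.
Hypothesis Hp : subst_primitive z.
Variable w : seq bool.
Let L := size w.

Local Open Scope R_scope.

Definition rG k := (INR (gk z q k w false) - INR (gk z q k w true)) / Qk q k.

Lemma gk_R k c : 0 <= INR (gk z q k w c) <= Qk q k.
Proof. split; [apply: pos_INR | apply: leR; apply: gk_le]. Qed.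

Lemma rG_le1 k : Rabs (rG k) <= 1.
Proof.
have H0 := gk_R k false; have H1 := gk_R k true; have HQ := Qk_pos Hq k.
rewrite /rG Rabs_div; last lra.
rewrite (Rabs_pos_eq (Qk q k)); last lra.
apply/Rle_div_l => //; rewrite Rmult_1_l.
apply: Rabs_le; lra.
Qed.

Lemma rG_rec k j : Rabs (rG (k + j)) <= Rabs (rA z q j) + 2 * INR (L - 1) / Qk q k.
Proof.
pose e b := INR (gk z q (k + j) w b) - (INR (gk z q k w false) * INR (ak z q j b) +
      INR (gk z q k w true) * (Qk q j - INR (ak z q j b))).
have He b : Rabs (e b) <= Qk q j * INR (L - 1).
  have H1 := gk_rec1 Hcl k j w b.
  have H2 := gk_rec2 Hcl k j w b.
  have := nat_close H1 H2.
  rewrite /e /Qk -INR_muln INR_addn !INR_muln INR_subn ?gk_le //.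
have HQk := Qk_pos Hq k; have HQj := Qk_pos Hq j.
have E : rG (k + j) = rG k * rA z q j + (e false - e true) / (Qk q k * Qk q j).
  rewrite /rG /rA /e QkD; field; lra.
rewrite E.
apply: Rle_trans (Rabs_triang _ _) _.
apply: Rplus_le_compat.
  rewrite Rabs_mult -{2}(Rmult_1_l (Rabs (rA z q j))).
  apply: Rmult_le_compat_r; [apply: Rabs_pos | apply: rG_le1].
rewrite Rabs_div; last by apply: Rgt_not_eq; apply: Rmult_lt_0_compat.
rewrite (Rabs_pos_eq (_ * _)); last by apply: Rlt_le; apply: Rmult_lt_0_compat.
apply/Rle_div_l; first by apply: Rmult_lt_0_compat.
have := He false; have := He true; have := Rabs_triang (e false) (- e true).
rewrite Rabs_Ropp => T1 T2 T3.
have -> : 2 * INR (L - 1) / Qk q k * (Qk q k * Qk q j) = 2 * (Qk q j * INR (L - 1)) by field; lra.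
rewrite /Rminus; lra.
Qed.

Lemma rG_small eps : 0 < eps -> exists k, Rabs (rG k) + 2 * INR (L - 1) / Qk q k < eps.
Proof.
move=> He.
have He4 : 0 < eps / 4 by lra.
have [k0 Hk0] := Qk_large Hq (2 * INR (L - 1)) He4.
have [j Hj] := rA_small Hq Hcl Hp He4.
exists (k0 + j)%nat.
have H1 := rG_rec k0 j.
have H2 := Hk0 k0 (leqnn _).
have H3 := Hk0 (k0 + j)%nat (leq_addr _ _).
lra.
Qed.

End FreqR2.

Local Open Scope R_scope.
Lemma real_lo (c N MM Q gm Lr : R) : 0 < Q -> 0 < N -> MM * Q <= N -> N < (MM + 1) * Q ->
  0 <= MM -> 0 <= gm <= Q -> 0 <= Lr -> MM * gm - MM * Lr <= c -> (gm - Lr) / Q - Q / N <= c / N.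
Proof.
move=> HQ HN H1 H2 HM Hg HL Hc.
have key : (gm - Lr) * N - Q * Q <= c * Q.
  case: (Rle_lt_dec 0 (gm - Lr)) => Hs.
    have A1 : (N - Q) * (gm - Lr) <= MM * Q * (gm - Lr) by apply: Rmult_le_compat_r; lra.
    have A2 : MM * Q * (gm - Lr) <= c * Q by nra.
    nra.
  have A1 : N * (gm - Lr) <= MM * Q * (gm - Lr) by nra.
  have A2 : MM * Q * (gm - Lr) <= c * Q by nra.
  nra.
have : 0 <= (c * Q - ((gm - Lr) * N - Q * Q)) / (Q * N).
  apply: Rdiv_le_0_compat; [lra | nra].
have -> : (c * Q - ((gm - Lr) * N - Q * Q)) / (Q * N) = c / N - ((gm - Lr) / Q - Q / N) by field; lra.
lra.
Qed.

Lemma real_hi (c N MM Q gM Lr : R) : 0 < Q -> 0 < N -> MM * Q <= N ->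
  0 <= MM -> 0 <= gM <= Q -> 0 <= Lr -> c <= (MM + 1) * (gM + Lr) -> c / N <= (gM + Lr) / Q + (Q + Lr) / N.
Proof.
move=> HQ HN H1 HM Hg HL Hc.
have key : c * Q <= (gM + Lr) * N + Q * (Q + Lr) by nra.
have : 0 <= ((gM + Lr) * N + Q * (Q + Lr) - c * Q) / (Q * N).
  apply: Rdiv_le_0_compat; [lra | nra].
have -> : ((gM + Lr) * N + Q * (Q + Lr) - c * Q) / (Q * N) = (gM + Lr) / Q + (Q + Lr) / N - c / N by field; lra.
lra.
Qed.
Local Close Scope R_scope.

Lemma cntF_mono F w n m : n <= m -> cntF F w n <= cntF F w m.
Proof.
move=> Hnm; rewrite /cntF (@big_cat_nat _ _ _ n 0 m) //=; exact: leq_addr.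
Qed.

Lemma sum_ge_min (h : bool -> nat) (G : nat -> bool) M :
  M * minn (h false) (h true) <= \sum_(0 <= s < M) h (G s).
Proof.
have -> : M * minn (h false) (h true) = \sum_(0 <= s < M) minn (h false) (h true).
  by rewrite sum_nat_const_nat subn0.
apply: leq_sum => s _; case: (G s); [exact: geq_minr | exact: geq_minl].
Qed.

Lemma sum_le_max (h : bool -> nat) (G : nat -> bool) M :
  \sum_(0 <= s < M) h (G s) <= M * maxn (h false) (h true).
Proof.
have -> : M * maxn (h false) (h true) = \sum_(0 <= s < M) maxn (h false) (h true).
  by rewrite sum_nat_const_nat subn0.
apply: leq_sum => s _; case: (G s); [exact: leq_maxr | exact: leq_maxl].
Qed.

Lemma INR_maxmin a b : (INR (maxn a b) - INR (minn a b) = Rabs (INR a - INR b))%R.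
Proof.
case: (leqP a b) => H.
  rewrite Rabs_minus_sym Rabs_pos_eq //.
  have := leR H; lra.
rewrite Rabs_pos_eq //.
have := leR (ltnW H); lra.
Qed.

Lemma inv_large C eps : (0 < eps)%R -> exists N0, 0 < N0 /\ forall n, N0 <= n -> (C / INR n < eps)%R.
Proof.
move=> He.
have [m [_ Hm]] := nfloor_ex (Rmax 0 (C / eps)) (Rmax_l _ _).
exists m.+1; split => // n Hn.
have Hnk : (INR m.+1 <= INR n)%R by apply: leR.
rewrite S_INR in Hnk.
have HN : (0 < INR n)%R by have := pos_INR m; lra.
apply/Rlt_div_l => //.
have : (C / eps < INR n)%R by have := Rmax_r 0 (C / eps); lra.
move/(Rlt_div_l _ _ _ He); lra.
Qed.

Section Freq3.
Variables (z : subst) (q : nat) (x : nat -> bool).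
Hypothesis Hq : 2 <= q.
Hypothesis Hcl : constant_length z q.
Hypothesis Hfp : is_fixed_point_limit z x.
Hypothesis Hp : subst_primitive z.
Variable w : seq bool.
Let L := size w.

Definition uF n := (INR (cntF x w n) / INR n)%R.
Let g k c := gk z q k w c.
Definition loF k := ((INR (minn (g k false) (g k true)) - INR (L - 1)) / Qk q k)%R.
Definition hiF k := ((INR (maxn (g k false) (g k true)) + INR (L - 1)) / Qk q k)%R.

Lemma uF_bounds k n : 0 < n ->
  (loF k - Qk q k / INR n <= uF n <= hiF k + (Qk q k + INR (L - 1)) / INR n)%R.
Proof.
move=> Hn.
have HQ := Qk_pos Hq k.
have Hq0 : 0 < expn q k by rewrite expn_gt0; apply/orP; left; lia.
set M := n %/ expn q k.
have H1 : M * expn q k <= n by apply: leq_divM.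
have H2 : n < M.+1 * expn q k by apply: ltn_ceil.
have HN : (0 < INR n)%R by apply: lt_0_INR; apply/ltP.
have HgR c : (0 <= INR (g k c) <= Qk q k)%R by apply: gk_R.
have Hmin : (0 <= INR (minn (g k false) (g k true)) <= Qk q k)%R.
  by case: (leqP (g k false) (g k true)) => _; [apply: HgR | apply: HgR].
have Hmax : (0 <= INR (maxn (g k false) (g k true)) <= Qk q k)%R.
  by case: (leqP (g k false) (g k true)) => _; [apply: HgR | apply: HgR].
have R1 : (INR M * Qk q k <= INR n)%R by rewrite /Qk -INR_muln; apply: leR.
have R2 : (INR n < (INR M + 1) * Qk q k)%R.
  by rewrite /Qk -S_INR -INR_muln; apply: lt_INR; apply/ltP.
have HL : (0 <= INR (L - 1))%R by apply: pos_INR.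
split.
  apply: (@real_lo _ _ (INR M)) => //; first by apply: pos_INR.
  have A1 := x_block2 Hcl Hfp k M w.
  have A2 := sum_ge_min (g k) x M.
  have A3 := cntF_mono x w H1.
  have A4 : M * minn (g k false) (g k true) <= cntF x w n + M * (L - 1).
    apply: leq_trans A2 _; apply: leq_trans A1 _; by rewrite leq_add2r.
  have := leR A4; rewrite INR_addn !INR_muln; lra.
apply: (@real_hi _ _ (INR M)) => //; first by apply: pos_INR.
have A1 := x_block1 Hcl Hfp k M.+1 w.
have A2 := sum_le_max (g k) x M.+1.
have A3 := cntF_mono x w (ltnW H2).
have A4 : cntF x w n <= M.+1 * maxn (g k false) (g k true) + M.+1 * (L - 1).
  apply: leq_trans A3 _; apply: leq_trans A1 _; by rewrite leq_add2r.
have := leR A4; rewrite INR_addn !INR_muln S_INR; lra.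
Qed.

Lemma hi_lo k : (hiF k - loF k = Rabs (rG z q w k) + 2 * INR (L - 1) / Qk q k)%R.
Proof.
have HQ := Qk_pos Hq k.
rewrite /rG Rabs_div; last lra.
rewrite (Rabs_pos_eq (Qk q k)); last lra.
rewrite -INR_maxmin /hiF /loF /g; field; lra.
Qed.

Lemma uF_cauchy : ex_lim_seq_cauchy uF.
Proof.
move=> [eps He] /=.
have He2 : (0 < eps / 2)%R by lra.
have [k Hk] := rG_small Hq Hcl Hp w He2.
have [N0 [HN0 HN]] := inv_large (2 * (Qk q k + INR (L - 1))) He2.
exists N0 => n m Hn Hm.
have Hn' : N0 <= n by apply/leP.
have Hm' : N0 <= m by apply/leP.
have B1 := uF_bounds k (leq_trans HN0 Hn').
have B2 := uF_bounds k (leq_trans HN0 Hm').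
have HQ := Qk_pos Hq k.
have HL : (0 <= INR (L - 1))%R by apply: pos_INR.
have HNn : (INR N0 <= INR n)%R by apply: leR.
have HNm : (INR N0 <= INR m)%R by apply: leR.
have HN0R : (0 < INR N0)%R by apply: lt_0_INR; apply/ltP.
have D1 : (Qk q k / INR n <= (Qk q k + INR (L - 1)) / INR N0)%R.
  apply: Rle_trans (_ : Qk q k / INR N0 <= _)%R.
    apply: Rmult_le_compat_l; first lra.
    apply: Rinv_le_contravar => //.
  apply: Rmult_le_compat_r; first by apply: Rlt_le; apply: Rinv_0_lt_compat.
  lra.
have D2 : (Qk q k / INR m <= (Qk q k + INR (L - 1)) / INR N0)%R.
  apply: Rle_trans (_ : Qk q k / INR N0 <= _)%R.
    apply: Rmult_le_compat_l; first lra.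
    apply: Rinv_le_contravar => //.
  apply: Rmult_le_compat_r; first by apply: Rlt_le; apply: Rinv_0_lt_compat.
  lra.
have D3 : ((Qk q k + INR (L - 1)) / INR n <= (Qk q k + INR (L - 1)) / INR N0)%R.
  apply: Rmult_le_compat_l; first lra.
  apply: Rinv_le_contravar => //.
have D4 : ((Qk q k + INR (L - 1)) / INR m <= (Qk q k + INR (L - 1)) / INR N0)%R.
  apply: Rmult_le_compat_l; first lra.
  apply: Rinv_le_contravar => //.
have HH := HN N0 (leqnn _).
have E1 : (2 * (Qk q k + INR (L - 1)) / INR N0 = 2 * ((Qk q k + INR (L - 1)) / INR N0))%R.
  by field; lra.
have HL2 := hi_lo k.
have HR : (0 <= Rabs (rG z q w k))%R by apply: Rabs_pos.
rewrite -/L in Hk. apply: Rabs_def1; lra.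
Qed.

Definition freq := real (Lim_seq uF).

Lemma freq_lim : is_lim_seq uF freq.
Proof.
have H := proj2 (ex_lim_seq_cauchy_corr uF) uF_cauchy.
by have := Lim_seq_correct' _ H.
Qed.

End Freq3.

Lemma lim_inv_n : is_lim_seq (fun n => / INR n)%R 0%R.
Proof.
have := is_lim_seq_inv _ _ is_lim_seq_INR; rewrite /=.
by apply.
Qed.

Section Pos.
Variables (z : subst) (q : nat) (x : nat -> bool).
Hypothesis Hq : 2 <= q.
Hypothesis Hcl : constant_length z q.
Hypothesis Hfp : is_fixed_point_limit z x.
Hypothesis Hp : subst_primitive z.

Lemma cntF_S F w n : cntF F w n.+1 = cntF F w n + (wins F (size w) n == w).
Proof. by rewrite /cntF big_nat_recr. Qed.

Lemma cnt_blocks (w : seq bool) B :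
  (forall t, exists i, t * B <= i < t.+1 * B /\ wins x (size w) i = w) ->
  forall t, t <= cntF x w (t * B).
Proof.
move=> Hocc; elim => [//|t IH].
have [i [/andP [Hi1 Hi2] Hw]] := Hocc t.
apply: leq_trans (_ : (cntF x w (i.+1)) <= _); last by apply: cntF_mono.
rewrite cntF_S Hw eqxx addn1 ltnS.
apply: leq_trans IH _; exact: cntF_mono.
Qed.

Lemma freq_pos_aux p Lw : exists B, 0 < B /\ forall t, t <= cntF x (wins x Lw p) (t * B).
Proof.
have [K [_ HK]] := Hp.
set k := (p + Lw).+1.
have Hk : p + Lw < expn q k by apply: leq_trans (ltn_expl _ _) ; [lia|].

have HqK : 0 < expn q K by rewrite expn_gt0; apply/orP; left; lia.
have Hqk : 0 < expn q k by rewrite expn_gt0; apply/orP; left; lia.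
exists (expn q K * expn q k); split; first by rewrite muln_gt0 HqK Hqk.
apply: cnt_blocks => t.
have Hs : size (iter_subst z K [:: x t]) = expn q K by rewrite (size_iter Hcl) muln1.
have [s Hs1 Hs2] := nthP false (HK (x t) (x 0)).
rewrite Hs in Hs1.
exists ((t * expn q K + s) * expn q k + p); split.
  have Hp' : p < expn q k by lia.
  apply/andP; split.
    by rewrite mulnDl -mulnA -addnA leq_addr.
  have T1 : (t * expn q K + s) * expn q k + p < (t * expn q K + s).+1 * expn q k.
    by rewrite mulSn addnC ltn_add2r.
  apply: leq_trans T1 _.
  have T2 : (t * expn q K + s).+1 <= t.+1 * expn q K by rewrite mulSn addnC -addSn leq_add2r.
  by rewrite mulnA leq_mul2r T2 orbT.
rewrite /wins size_mkseq.
apply: (@eq_from_nth _ false); rewrite !size_mkseq // => u Hu.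
rewrite !nth_mkseq // -addnA (BD Hcl Hfp) ?(BD Hcl Hfp K) //; last lia.
rewrite (@BD z q Hcl x Hfp K t s Hs1) Hs2 -[p + u]add0n -[0]/(0 * expn q k) (BD Hcl Hfp) //; lia.
Qed.

Lemma freq_pos p Lw : (0 < freq x (wins x Lw p))%R.
Proof.
have [B [HB Hc]] := freq_pos_aux p Lw.
set w := wins x Lw p.
have HBR : (0 < INR B)%R by apply: lt_0_INR; apply/ltP.
have Hle : Rbar_le (/ INR B - 0)%R (freq x w).
  apply: (is_lim_seq_le_loc (fun n => / INR B - / INR n)%R (uF x w)).
  - exists 1%nat => n /leP Hn.
    have HnR : (0 < INR n)%R by apply: lt_0_INR; apply/ltP.
    set M := n %/ B.
    have H1 : M * B <= n by apply: leq_divM.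
    have H2 : n < M.+1 * B by apply: ltn_ceil.
    have C1 : M <= cntF x w n by apply: leq_trans (Hc M) (cntF_mono x w H1).
    have R1 := leR C1.
    have R2 : (INR n < (INR M + 1) * INR B)%R by rewrite -S_INR -INR_muln; apply: lt_INR; apply/ltP.
    rewrite /uF.
    have : (INR n / INR B - 1 <= INR M)%R.
      have -> : (INR n / INR B - 1 = (INR n - INR B) / INR B)%R by field; lra.
      apply/Rle_div_l => //; lra.
    move=> R3.
    have -> : (/ INR B - / INR n = (INR n / INR B - 1) / INR n)%R by field; lra.
    apply: Rmult_le_compat_r; first by apply: Rlt_le; apply: Rinv_0_lt_compat.
    lra.
  - apply: is_lim_seq_minus'; [apply: is_lim_seq_const | apply: lim_inv_n].
  - exact: (freq_lim Hq Hcl Hfp Hp).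
rewrite /= Rminus_0_r in Hle.
have := Rinv_0_lt_compat _ HBR; lra.
Qed.
End Pos.

Section Pairs.
Variable x : nat -> bool.

Lemma size_wins F L i : size (wins F L i) == L.
Proof. by rewrite size_mkseq. Qed.

Definition tW L i : L.-tuple bool := Tuple (size_wins x L i).

Lemma sum_partition L m (f : L.-tuple bool -> nat) :
  \sum_(i < m) f (tW L i) = \sum_(u : L.-tuple bool) f u * cntF x u m.
Proof.
have E (u : L.-tuple bool) : cntF x u m = \sum_(i < m) (tW L i == u).
  rewrite /cntF big_mkord size_tuple; apply: eq_bigr => i _.
  by [].
under [RHS]eq_bigr => u _ do rewrite E big_distrr /=.
rewrite exchange_big /=; apply: eq_bigr => i _.
rewrite (bigD1 (tW L i)) //= eqxx muln1 big1 ?addn0 // => u /negbTE Hu.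
by rewrite eq_sym Hu muln0.
Qed.

Lemma pair_partition L m (P : seq bool -> seq bool -> bool) :
  \sum_(i < m) \sum_(j < m) P (wins x L i) (wins x L j) =
  \sum_(u : L.-tuple bool) \sum_(v : L.-tuple bool) P u v * cntF x u m * cntF x v m.
Proof.
have -> : \sum_(i < m) \sum_(j < m) P (wins x L i) (wins x L j) =
          \sum_(i < m) (fun u : L.-tuple bool => \sum_(j < m) P u (tW L j)) (tW L i) by [].
rewrite (sum_partition m (fun u : L.-tuple bool => \sum_(j < m) P u (tW L j))); apply: eq_bigr => u _.
rewrite (sum_partition m (fun v => P u v)) big_distrl /=; apply: eq_bigr => v _.
by rewrite mulnAC.
Qed.

End Pairs.

Section Lines.
Variable x : nat -> bool.

Definition Tinf l i j := [&& 0 < i, 0 < j, i != j, all (fun k => rp x (i + k) (j + k)) (seq.iota 0 l) & ~~ rp x i.-1 j.-1].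
Definition Ainf l n := \sum_(i < n) \sum_(j < n) Tinf l i j.
Definition Qp l (u v : seq bool) := (nth false u 0 != nth false v 0) && all (fun k => nth false u k.+1 == nth false v k.+1) (seq.iota 0 l).

Lemma all_iotaS (P : nat -> bool) l : all P (seq.iota 0 l.+1) = all P (seq.iota 0 l) && P l.
Proof. by rewrite -addn1 iotaD all_cat /= andbT. Qed.

Lemma Tinf_S l i j : Tinf l.+1 i j = Tinf l i j && rp x (i + l) (j + l).
Proof.
rewrite /Tinf all_iotaS.
by case: (0 < i); case: (0 < j); case: (i != j); case: (all _ _); case: (rp _ _ _); case: (rp _ _ _).
Qed.

Lemma inK_T l i j : in_K x l i j = (Tinf l i j - Tinf l.+1 i j) :> nat.
Proof.
rewrite Tinf_S /in_K /Tinf.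
by case: (0 < i); case: (0 < j); case: (i != j); case: (all _ _); case: (rp x i.-1 j.-1); case: (rp x (i + l) (j + l)).
Qed.

Lemma Tinf_le l i j : Tinf l.+1 i j <= Tinf l i j.
Proof. by rewrite Tinf_S; case: (Tinf l i j); case: (rp _ _ _). Qed.

Lemma sum_subn_pw (I : finType) (a b : I -> nat) : (forall i, b i <= a i) ->
  \sum_(i : I) (a i - b i) = \sum_(i : I) a i - \sum_(i : I) b i.
Proof.
move=> Hba.
have -> : \sum_(i : I) a i = \sum_(i : I) (a i - b i) + \sum_(i : I) b i.
  rewrite -big_split /=; apply: eq_bigr => i _; by rewrite subnK.
by rewrite addnK.
Qed.

Lemma density_count l n : \sum_(i < n) \sum_(j < n) in_K x l i j = Ainf l n - Ainf l.+1 n.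
Proof.
rewrite /Ainf -sum_subn_pw => [|i]; last by apply: leq_sum => j _; apply: Tinf_le.
apply: eq_bigr => i _.
rewrite -sum_subn_pw => [|j]; last by apply: Tinf_le.
by apply: eq_bigr => j _; rewrite inK_T.
Qed.

Lemma Tinf_Qp l i j : Tinf l i j = [&& 0 < i, 0 < j & Qp l (wins x l.+1 i.-1) (wins x l.+1 j.-1)].
Proof.
rewrite /Tinf /Qp.
case: i => [//|i]; case: j => [//|j] /=.
rewrite !addn0.
have -> : all (fun k => nth false [seq x (i + u) | u <- seq.iota 1 l] k ==
                        nth false [seq x (j + u) | u <- seq.iota 1 l] k) (seq.iota 0 l)
        = all (fun k => rp x (i.+1 + k) (j.+1 + k)) (seq.iota 0 l).
  apply: eq_in_all => k; rewrite mem_iota add0n => Hk.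
  rewrite (nth_map 0) ?size_iota // (nth_map 0) ?size_iota // nth_iota //.
  by rewrite /rp !addnA !addn1 !addSn.
rewrite /rp.
case: (x i =P x j) => Hx /=.
  by rewrite !andbF.
rewrite !andbT.
case: (i.+1 =P j.+1) => [[Hij]|Hij]; last by [].
by rewrite Hij in Hx.
Qed.

Lemma Ainf_Qp l n : Ainf l n = \sum_(i < n.-1) \sum_(j < n.-1) Qp l (wins x l.+1 i) (wins x l.+1 j).
Proof.
case: n => [|m]; first by rewrite /Ainf !big_ord0.
rewrite /Ainf big_ord_recl big1 => [|j _]; last by rewrite Tinf_Qp.
rewrite add0n /=; apply: eq_bigr => i _.
rewrite big_ord_recl Tinf_Qp /= add0n; apply: eq_bigr => j _.
by rewrite Tinf_Qp.
Qed.

End Lines.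

Section Finite.
Variable x : nat -> bool.

Definition Tn n l i j := [&& i <= n - l, j <= n - l, l <= n, i != j,
   all (fun k => rp x (i + k) (j + k)) (seq.iota 0 l) & (0 < minn i j) ==> ~~ rp x i.-1 j.-1].
Definition Bn n l := \sum_(i < n) \sum_(j < n) Tn n l i j.

Lemma max_lt_eq n l i j : (maxn i j < n - l) = [&& i <= n - l.+1, j <= n - l.+1 & l < n].
Proof. by apply/idP/idP => H; lia. Qed.

Lemma is_line_T n l i j : is_line x n i j l = Tn n l i j && ~~ Tn n l.+1 i j.
Proof.
rewrite /is_line /Tn all_iotaS max_lt_eq.
by case: (i <= n - l); case: (j <= n - l); case: (l <= n); case: (i != j);
  case: (all _ _); case: (_ ==> _); case: (i <= n - l.+1); case: (j <= n - l.+1);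
  case: (l < n); case: (rp x (i + l) (j + l)).
Qed.

Lemma Tn_le n l i j : Tn n l.+1 i j <= Tn n l i j.
Proof.
case: (boolP (Tn n l.+1 i j)) => // H.
move: H; rewrite /Tn all_iotaS => /andP [H1 /andP [H2 /andP [H3 /andP [H4 /andP [/andP [H5 _] H6]]]]].
rewrite H4 H5 H6 !andbT.
have -> : i <= n - l by lia.
have -> : j <= n - l by lia.
have -> : l <= n by lia.
by [].
Qed.

Lemma N_lines_B n l : N_lines x n l = Bn n l - Bn n l.+1.
Proof.
rewrite /N_lines /Bn -sum_subn_pw => [|i]; last by apply: leq_sum => j _; apply: Tn_le.
apply: eq_bigr => i _.
rewrite -sum_subn_pw => [|j]; last by apply: Tn_le.
apply: eq_bigr => j _; rewrite is_line_T.
by have := Tn_le n l i j; case: (Tn n l i j); case: (Tn n l.+1 i j).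
Qed.

Lemma Bn_le n l : Bn n l.+1 <= Bn n l.
Proof. by apply: leq_sum => i _; apply: leq_sum => j _; apply: Tn_le. Qed.

Lemma Bn_big n l : n < l -> Bn n l = 0.
Proof.
move=> H; rewrite /Bn big1 // => i _; rewrite big1 // => j _.
rewrite /Tn; have -> : (l <= n) = false by apply/negbTE; rewrite -ltnNge.
by rewrite !andbF.
Qed.

Local Open Scope R_scope.

Lemma tele (a : nat -> R) N : sum_n (fun k => a k - a k.+1) N = a 0%nat - a N.+1.
Proof.
elim: N => [|N IH]; first by rewrite sum_O.
rewrite sum_Sn IH /plus /=; lra.
Qed.

Lemma Lambda_B n l : rqa_Lambda x n l = INR (Bn n l) / INR (n * n - n).
Proof.
rewrite /rqa_Lambda /rqa_lambda.
pose a k := INR (Bn n (l + k)) / INR (n * n - n).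
have E k : INR (N_lines x n (l + k)) / INR (n * n - n) = a k - a k.+1.
  rewrite N_lines_B INR_subn; last by apply: Bn_le.
  by rewrite /a /= addnS /Rdiv Rmult_minus_distr_r.
rewrite (sum_n_ext _ _ _ E) tele /a addn0 [Bn n (l + n.+1)]Bn_big; last by lia.
rewrite /Rdiv Rmult_0_l; lra.
Qed.

Lemma lambda_B n l : rqa_lambda x n l = INR (Bn n l) / INR (n * n - n) - INR (Bn n l.+1) / INR (n * n - n).
Proof.
rewrite /rqa_lambda N_lines_B INR_subn; last by rewrite Bn_le.
by rewrite /Rdiv Rmult_minus_distr_r.
Qed.
End Finite.

Section Compare.
Variable x : nat -> bool.

Lemma Tn_Tinf n l i j : [&& 0 < i, 0 < j, i <= n - l & j <= n - l] -> Tn x n l i j = Tinf x l i j.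
Proof.
move=> /and4P [H1 H2 H3 H4].
have H5 : l <= n by lia.
have H6 : 0 < minn i j by lia.
rewrite /Tn /Tinf H1 H2 H3 H4 H5 H6 /=.
by case: (i != j); case: (all _ _); case: (rp _ _ _).
Qed.

Definition bad n l i j := ((i == 0) + (j == 0) + (n - l < i) + (n - l < j))%nat.

Lemma Tn_close n l i j : Tn x n l i j <= Tinf x l i j + bad n l i j /\ Tinf x l i j <= Tn x n l i j + bad n l i j.
Proof.
case: (boolP [&& 0 < i, 0 < j, i <= n - l & j <= n - l]) => H.
  by rewrite Tn_Tinf // !leq_addr.
have Hb : 1 <= bad n l i j.
  move: H; rewrite /bad; case: i => [|i]; case: j => [|j] //=; rewrite ?addn0 ?add0n //.
  case: (leqP i.+1 (n - l)); case: (leqP j.+1 (n - l)) => //.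
have T1 : Tn x n l i j <= 1 by case: (Tn _ _ _ _ _).
have T2 : Tinf x l i j <= 1 by case: (Tinf _ _ _ _).
split; lia.
Qed.

Lemma sum_eq0 n : \sum_(i < n) (nat_of_bool (nat_of_ord i == 0)) <= 1.
Proof.
case: n => [|n]; first by rewrite big_ord0.
by rewrite big_ord_recl big1.
Qed.

Lemma sum_tail n l : \sum_(i < n) (nat_of_bool (n - l < nat_of_ord i)) <= l.
Proof.
rewrite -(big_mkord xpredT (fun i => (n - l < i : nat))).
have H : n - l <= n by rewrite leq_subr.
rewrite (@big_cat_nat _ _ _ (n - l) 0 n) //= big_nat big1 => [|i /andP [_ Hi]]; last first.
  by rewrite ltnNge (ltnW Hi).
rewrite add0n.
apply: leq_trans (_ : \sum_(n - l <= i < n) 1 <= _); first by apply: leq_sum => i _; case: (_ < _).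
rewrite sum_nat_const_nat muln1; lia.
Qed.

Lemma sum_bad n l : \sum_(i < n) \sum_(j < n) bad n l i j <= 2 * n * (1 + l).
Proof.
pose a i := ((i == 0) + (n - l < i))%nat.
have E : \sum_(i < n) \sum_(j < n) bad n l i j = \sum_(i < n) \sum_(j < n) (a i + a j).
  by apply: eq_bigr => i _; apply: eq_bigr => j _; rewrite /bad /a; lia.
rewrite E.
have E2 : \sum_(i < n) \sum_(j < n) (a i + a j) = 2 * n * \sum_(i < n) a i.
  under eq_bigr => i _ do rewrite big_split /= sum_nat_const card_ord.
  rewrite big_split /= sum_nat_const card_ord -big_distrr /=; lia.
rewrite E2 leq_mul2l; apply/orP; right.
rewrite /a big_split /=; apply: leq_add; [exact: sum_eq0 | exact: sum_tail].
Qed.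

Lemma B_close n l : (Rabs (INR (Bn x n l) - INR (Ainf x l n)) <= INR (2 * n * (1 + l)))%R.
Proof.
apply: nat_close.
  rewrite /Bn /Ainf; apply: leq_trans (leq_add (leqnn _) (sum_bad n l)).
  rewrite -big_split; apply: leq_sum => i _; rewrite -big_split; apply: leq_sum => j _.
  exact: (proj1 (Tn_close n l i j)).
rewrite /Bn /Ainf; apply: leq_trans (leq_add (leqnn _) (sum_bad n l)).
rewrite -big_split; apply: leq_sum => i _; rewrite -big_split; apply: leq_sum => j _.
exact: (proj2 (Tn_close n l i j)).
Qed.
End Compare.

Section Tight.
Variable x : nat -> bool.

Lemma Tinf_inj L i1 j1 i2 j2 k1 k2 : Tinf x L i1 j1 -> Tinf x L i2 j2 -> k1 < L -> k2 < L ->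
  i1 + k1 = i2 + k2 -> j1 + k1 = j2 + k2 -> k1 = k2.
Proof.
wlog Hk : i1 j1 i2 j2 k1 k2 / k1 <= k2.
  move=> W H1 H2 Hk1 Hk2 E1 E2.
  case: (leqP k1 k2) => H; first by apply: (W i1 j1 i2 j2 k1 k2).
  by symmetry; apply: (W i2 j2 i1 j1) => //; apply: ltnW.
move=> H1 H2 Hk1 Hk2 E1 E2.
case: (eqVneq k1 k2) => [//|Hne].
have Hlt : k1 < k2 by rewrite ltn_neqAle Hne Hk.
exfalso.
move: H1 H2; rewrite /Tinf => /and5P [Hi1 Hj1 _ _ Hn] /and5P [_ _ _ Hall _].
have Hm : (k2 - k1).-1 \in seq.iota 0 L by rewrite mem_iota; lia.
have := allP Hall _ Hm.
have -> : i2 + (k2 - k1).-1 = i1.-1 by lia.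
have -> : j2 + (k2 - k1).-1 = j1.-1 by lia.
by move=> H; rewrite H in Hn.
Qed.

Lemma lt_add_ord i k n L : i < n -> k < L -> i + k < n + L.
Proof. lia. Qed.

Definition shiftf n L (p : 'I_n * 'I_n * 'I_L) : 'I_(n + L) * 'I_(n + L) :=
  (Ordinal (lt_add_ord (ltn_ord p.1.1) (ltn_ord p.2)), Ordinal (lt_add_ord (ltn_ord p.1.2) (ltn_ord p.2))).

Lemma card_A n L : #|[pred p : 'I_n * 'I_n * 'I_L | Tinf x L p.1.1 p.1.2]| = L * Ainf x L n.
Proof.
rewrite -sum1_card big_mkcond /=.
have -> : \sum_(p : 'I_n * 'I_n * 'I_L) (if Tinf x L p.1.1 p.1.2 then 1 else 0) =
  \sum_(p : 'I_n * 'I_n * 'I_L) (fun (ij : 'I_n * 'I_n) (k : 'I_L) => (Tinf x L ij.1 ij.2 : nat)) p.1 p.2.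
  by apply: eq_bigr => [[[i j] k]] _ /=; case: (Tinf _ _ _ _).
rewrite -(pair_bigA _ (fun (ij : 'I_n * 'I_n) (k : 'I_L) => (Tinf x L ij.1 ij.2 : nat))) /=.
have -> : \sum_(ij : 'I_n * 'I_n) \sum_(k < L) (Tinf x L ij.1 ij.2 : nat) =
          \sum_(ij : 'I_n * 'I_n) (fun (i j : 'I_n) => L * Tinf x L i j) ij.1 ij.2.
  by apply: eq_bigr => [[i j]] _ /=; rewrite sum_nat_const card_ord.
rewrite -(pair_bigA _ (fun (i j : 'I_n) => L * Tinf x L i j)) /= /Ainf big_distrr /=; apply: eq_bigr => i _.
by rewrite big_distrr.
Qed.

Lemma tight n L : L * Ainf x L n <= (n + L) * (n + L).
Proof.
rewrite -card_A.
have -> : (n + L) * (n + L) = #|{: 'I_(n + L) * 'I_(n + L)}| by rewrite card_prod card_ord.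
apply: (@leq_card_in _ _ (@shiftf n L)).
move=> [[i1 j1] k1] [[i2 j2] k2]; rewrite !inE /= => H1 H2 [E1 E2].
have Hk : nat_of_ord k1 = k2 by apply: (Tinf_inj H1 H2 (ltn_ord k1) (ltn_ord k2) E1 E2).
have Hi : nat_of_ord i1 = i2 by lia.
have Hj : nat_of_ord j1 = j2 by lia.
by congr (_, _, _); apply: val_inj.
Qed.
End Tight.

Definition AG (x : nat -> bool) m a b := forall k, k < m -> x (a + k) = x (b + k).

Section Comb2.
Variable x : nat -> bool.
Variable m : nat.
Hypothesis Hm : 0 < m.
Hypothesis NoLS : forall a b, AG x m a.+1 b.+1 -> x a = x b.

Lemma AG_back a b : AG x m a.+1 b.+1 -> AG x m a b.
Proof.
move=> H k Hk.
case: k Hk => [|k] Hk; first by rewrite !addn0; apply: NoLS.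
by have := H k (ltnW Hk); rewrite !addSn !addnS.
Qed.

Lemma AG_back_n s a b : AG x m (a + s) (b + s) -> AG x m a b.
Proof.
elim: s a b => [|s IH] a b; first by rewrite !addn0.
by rewrite !addnS => H; apply: IH; apply: AG_back.
Qed.

Lemma AG_per a d : AG x m a (a + d) -> forall t, t <= a -> x t = x (t + d).
Proof.
move=> H t Ht.
have H' : AG x m (t + (a - t)) (t + d + (a - t)).
  by rewrite subnKC // -addnA [d + _]addnC addnA subnKC.
have := AG_back_n H' Hm; by rewrite !addn0.
Qed.

Lemma pigeon T : exists d, 0 < d <= expn 2 m /\ forall t, t <= T -> x t = x (t + d).
Proof.
pose f (i : 'I_(expn 2 m).+1) : m.-tuple bool := tW x m (T + i).
have Hni : ~~ injectiveb f.
  apply/negP => /injectiveP Hinj.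
  have := @leq_card _ _ f Hinj; rewrite card_ord card_tuple card_bool.
  by rewrite ltnn.
have [i [j Hij Hf]] := injectivePn _ Hni.
wlog Hlt : i j Hij Hf / i < j.
  move=> W; case: (ltngtP i j) => H; first exact: (W i j).
    by apply: (W j i) => //; rewrite eq_sym.
  by move: Hij; rewrite -val_eqE /= H eqxx.
exists (j - i); split.
  apply/andP; split; first by rewrite subn_gt0.
  have := ltn_ord j; lia.
have HAG : AG x m (T + i) (T + i + (j - i)).
  move=> k Hk.
  have := congr1 (fun s : m.-tuple bool => nth false s k) Hf.
  rewrite /f /tW /= /wins !nth_mkseq //.
  by have -> : T + i + (j - i) = T + j by lia.
move=> t Ht; apply: (AG_per HAG); lia.
Qed.
End Comb2.

Lemma bound_ex (P : nat -> nat -> Prop) M :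
  (forall d, d <= M -> exists t, P d t) -> exists T, forall d, d <= M -> exists t, t <= T /\ P d t.
Proof.
elim: M => [|M IH] H.
  have [t Ht] := H 0 (leqnn 0).
  by exists t => d; rewrite leqn0 => /eqP ->; exists t.
have [T HT] := IH (fun d Hd => H d (leqW Hd)).
have [t Ht] := H M.+1 (leqnn _).
exists (maxn T t) => d; rewrite leq_eqVlt => /orP [/eqP ->|Hd].
  by exists t; split => //; apply: leq_maxr.
have [t' [Ht'1 Ht'2]] := HT d Hd.
exists t'; split => //; apply: leq_trans Ht'1 (leq_maxl _ _).
Qed.

Section Comb3.
Variable x : nat -> bool.
Definition NEP := ~ exists p N, 0 < p /\ forall t, N <= t -> x (t + p) = x t.
Hypothesis Hnep : NEP.

Lemma LS_exists m : 0 < m -> exists a b, x a != x b /\ AG x m a.+1 b.+1.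
Proof.
move=> Hm; apply: NNPP => HnLS.
have NoLS : forall a b, AG x m a.+1 b.+1 -> x a = x b.
  move=> a b H; apply: NNPP => Hne; apply: HnLS; exists a, b; split => //.
  by apply/eqP.
apply: Hnep.
have [d [Hd Hper]] : exists d, 0 < d <= expn 2 m /\ forall t, x t = x (t + d).
  apply: NNPP => Hno.
  have Hall : forall d, d <= expn 2 m -> exists t, 0 < d -> x t <> x (t + d).
    move=> d Hd; apply: NNPP => Hn; apply: Hno; exists d.
    case: (posnP d) => [Hd0|Hd0].
      exfalso; apply: Hn; exists 0 => H; by rewrite Hd0 in H.
    split; first by rewrite ?Hd0 Hd ?andbT.
    move=> t; apply: NNPP => Ht; apply: Hn; exists t => _; exact: Ht.
  have [T HT] := bound_ex Hall.
  have [d [/andP [Hd1 Hd2] Hp]] := pigeon Hm NoLS T.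
  have [t [Ht1 Ht2]] := HT d Hd2.
  by apply: (Ht2 Hd1); apply: Hp.
exists d, 0; split; first by case/andP: Hd.
by move=> t _; rewrite -Hper.
Qed.

Lemma bispecial m : exists a b l, m <= l /\ x a != x b /\ AG x l a.+1 b.+1 /\ x (a.+1 + l) != x (b.+1 + l).
Proof.
have [a [b [Hab HAG]]] := LS_exists (ltn0Sn m).
apply: NNPP => Hno.
have Hind : forall l, m.+1 <= l -> AG x l a.+1 b.+1.
  elim => [//|l IH] Hl.
  case: (ltngtP m.+1 l.+1) => Hml; last by rewrite -Hml.
    have Hl' : m.+1 <= l by [].
    have H1 := IH Hl'.
    have H2 : x (a.+1 + l) = x (b.+1 + l).
      apply: NNPP => Hne; apply: Hno; exists a, b, l; split; first by lia.
      by split => //; split => //; apply/eqP.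
    move=> k Hk; case: (ltngtP k l) => Hkl.
    - exact: H1.
    - by lia.
    - by rewrite Hkl.
  by lia.
have Hall : forall k, x (a.+1 + k) = x (b.+1 + k).
  by move=> k; apply: (Hind (maxn k.+1 m.+1)); [apply: leq_maxr | rewrite leq_max ltnSn].
apply: Hnep.
case: (ltngtP a b) => Hlt.
- exists (b - a), a.+1; split; first by rewrite subn_gt0.
  move=> t Ht.
  have := Hall (t - a.+1).
  have -> : a.+1 + (t - a.+1) = t by lia.
  by have -> : b.+1 + (t - a.+1) = t + (b - a) by lia.
- exists (a - b), b.+1; split; first by rewrite subn_gt0.
  move=> t Ht.
  have := Hall (t - b.+1).
  have -> : b.+1 + (t - b.+1) = t by lia.
  by have -> : a.+1 + (t - b.+1) = t + (a - b) by lia.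
- by move: Hab; rewrite Hlt eqxx.
Qed.
End Comb3.

Lemma NEP_x (z : subst) (q : nat) (x : nat -> bool) :
  2 <= q -> constant_length z q -> is_fixed_point_limit z x -> subst_primitive z ->
  subst_aperiodic z -> NEP x.
Proof.
move=> Hq Hcl Hfp [K [_ HK]] [y [Hy Hny]] [p [Nn [Hp Hper]]].
apply: Hny; exists p; split => // t.
have [k [a /infixP [s1 [s2 E]]]] := Hy t p.+1.
set w := mkseq (fun s => y (t + s)) p.+1 in E.
have Hw : forall s, s <= p -> nth false w s = y (t + s) by move=> s Hs; rewrite nth_mkseq.
have Hwsz : size w = p.+1 by rewrite size_mkseq.
clearbody w.
have HszK : size (iter_subst z K [:: x Nn]) = expn q K by rewrite (size_iter Hcl) muln1.
have [s0 Hs0 Es0] := nthP false (HK (x Nn) a).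
rewrite HszK in Hs0.
have Hszk : size (iter_subst z k [:: a]) = expn q k by rewrite (size_iter Hcl) muln1.
have Hsz : size s1 + p.+1 + size s2 = expn q k.
  by rewrite -Hszk E !size_cat Hwsz addnA.
set P0 := (Nn * expn q K + s0) * expn q k + size s1.
have Hocc : forall s, s <= p -> x (P0 + s) = y (t + s).
  move=> s Hs.
  rewrite /P0 -addnA (BD Hcl Hfp); last by lia.
  rewrite (@BD z q Hcl x Hfp K Nn s0 Hs0) Es0 E nth_cat ltnNge leq_addr /= addKn.
  by rewrite nth_cat Hwsz ltnS Hs Hw.
have HP0 : Nn <= P0.
  rewrite /P0; apply: leq_trans (leq_addr _ _).
  apply: leq_trans (_ : Nn * expn q K <= _).
    by rewrite leq_pmulr // expn_gt0; apply/orP; left; lia.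
  apply: leq_trans (_ : Nn * expn q K + s0 <= _); first by apply: leq_addr.
  by rewrite leq_pmulr // expn_gt0; apply/orP; left; lia.
rewrite -(Hocc p (leqnn p)) Hper // -[P0]addn0 Hocc //.
by rewrite addn0.
Qed.

Local Open Scope R_scope.

Lemma series_of_lim (a : nat -> R) (l : R) : is_lim_seq (sum_n a) l -> is_series a l.
Proof. by []. Qed.

Lemma lim_inv_pred : is_lim_seq (fun n => / INR n.-1) 0.
Proof. apply/is_lim_seq_incr_1; exact: lim_inv_n. Qed.

Lemma lim_inv_S : is_lim_seq (fun n => / INR n.+1) 0.
Proof. by have := proj1 (is_lim_seq_incr_1 _ _) lim_inv_n. Qed.

Lemma lim_bigR (I : Type) (r : seq I) (g : nat -> I -> R) (L : I -> R) :
  (forall i, is_lim_seq (fun n => g n i) (L i)) ->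
  is_lim_seq (fun n => \big[Rplus/0]_(i <- r) g n i) (\big[Rplus/0]_(i <- r) L i).
Proof.
move=> H; elim: r => [|i r IH].
  rewrite big_nil; apply: is_lim_seq_ext (is_lim_seq_const 0) => n; by rewrite big_nil.
rewrite big_cons.
apply: is_lim_seq_ext (is_lim_seq_plus' _ _ _ _ (H i) IH) => n; by rewrite big_cons.
Qed.

Lemma INR_big (I : Type) (r : seq I) (F : I -> nat) :
  INR (\sum_(i <- r) F i) = \big[Rplus/0]_(i <- r) INR (F i).
Proof. by apply: (big_morph INR plus_INR). Qed.

Lemma divR_big (I : Type) (r : seq I) (F : I -> R) D :
  (\big[Rplus/0]_(i <- r) F i) / D = \big[Rplus/0]_(i <- r) (F i / D).
Proof.
apply: (big_morph (fun t => t / D)) => [a b|]; rewrite /Rdiv; lra.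
Qed.

Lemma lim_transfer (a b : nat -> R) (S C : R) :
  is_lim_seq (fun n => a n / INR (n * n)) S -> (forall n, Rabs (b n - a n) <= C * INR n) ->
  is_lim_seq (fun n => b n / INR (n * n - n)) S.
Proof.
move=> Ha Hb.
have E : eventually (fun n => (a n / INR (n * n)) * (1 + / INR n.-1) + (b n - a n) * (/ INR n.-1 / INR n)
                            = b n / INR (n * n - n)).
  exists 2%nat => n Hn.
  have Hn' : (2 <= n)%nat by apply/leP.
  have -> : (n * n - n = n * n.-1)%nat by rewrite -subn1 mulnBr muln1.
  rewrite !INR_muln.
  have H1 : 1 <= INR n.-1 by apply: (leR (n:=n.-1) (m:=1)); lia.
  have H2 : 2 <= INR n by apply: (leR (n:=n) (m:=2)).
  have -> : INR n = INR n.-1 + 1 by rewrite -S_INR prednK //; lia.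
  field; lra.
apply: is_lim_seq_ext_loc E _.
have L1 : is_lim_seq (fun n => a n / INR (n * n) * (1 + / INR n.-1)) (S * (1 + 0)).
  apply: is_lim_seq_mult'; first exact: Ha.
  apply: is_lim_seq_plus'; [exact: is_lim_seq_const | exact: lim_inv_pred].
have L2 : is_lim_seq (fun n => (b n - a n) * (/ INR n.-1 / INR n)) 0.
  apply/is_lim_seq_abs_0.
  apply: (is_lim_seq_le_le_loc (fun _ => 0) _ (fun n => Rabs C * / INR n.-1)).
  - exists 2%nat => n Hn.
    have Hn' : (2 <= n)%nat by apply/leP.
    have HnR : 0 < INR n by apply: lt_0_INR; apply/ltP; lia.
    have Hn1 : 0 < INR n.-1 by apply: lt_0_INR; apply/ltP; lia.
    split; first by apply: Rabs_pos.
    rewrite Rabs_mult.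
    rewrite (Rabs_pos_eq (/ INR n.-1 / INR n)); last first.
      by apply: Rlt_le; apply: Rdiv_lt_0_compat => //; apply: Rinv_0_lt_compat.
    have Hb' := Hb n.
    have HC : C * INR n <= Rabs C * INR n by apply: Rmult_le_compat_r; [lra | apply: Rle_abs].
    have -> : Rabs (b n - a n) * (/ INR n.-1 / INR n) = (Rabs (b n - a n) / INR n) * / INR n.-1.
      by field; lra.
    apply: Rmult_le_compat_r; first by apply: Rlt_le; apply: Rinv_0_lt_compat.
    apply/Rle_div_l => //; lra.
  - exact: is_lim_seq_const.
  - by have := is_lim_seq_mult' _ _ _ _ (is_lim_seq_const (Rabs C)) lim_inv_pred; rewrite Rmult_0_r.
have := is_lim_seq_plus' _ _ _ _ L1 L2.
move=> HH; replace S with (S * (1 + 0) + 0) by ring; exact: HH.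
Qed.

Local Close Scope R_scope.

Section Main.
Variables (z : subst) (q : nat) (x : nat -> bool).
Hypothesis Hq : 2 <= q.
Hypothesis Hcl : constant_length z q.
Hypothesis Hfp : is_fixed_point_limit z x.
Hypothesis Hp : subst_primitive z.

Local Open Scope R_scope.

Lemma cnt0 (u : seq bool) : cntF x u 0 = 0%nat.
Proof. by rewrite /cntF big_geq. Qed.

Lemma cR_lim (u : seq bool) : is_lim_seq (fun n => INR (cntF x u n.-1) / INR n) (freq x u).
Proof.
apply/is_lim_seq_incr_1 => /=.
have E : forall n, uF x u n * (1 - / INR n.+1) = INR (cntF x u n) / INR n.+1.
  case => [|n]; first by rewrite /uF cnt0 /=; rewrite /Rdiv !Rmult_0_l.
  rewrite /uF.
  have H0 : 0 < INR n.+1 by apply: lt_0_INR; lia.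
  have H2 : INR n.+2 = INR n.+1 + 1 by rewrite S_INR.
  rewrite H2; field; lra.
apply: is_lim_seq_ext E _.
rewrite -[freq x u]Rmult_1_r.
apply: is_lim_seq_mult'; first exact: (freq_lim Hq Hcl Hfp Hp).
have := is_lim_seq_minus' _ _ _ _ (is_lim_seq_const 1) lim_inv_S.
by rewrite Rminus_0_r.
Qed.

Definition Sx l := \big[Rplus/0]_(u : (l.+1).-tuple bool) \big[Rplus/0]_(v : (l.+1).-tuple bool)
   (INR (Qp l u v) * freq x u * freq x v).

Lemma A_lim l : is_lim_seq (fun n => INR (Ainf x l n) / INR (n * n)) (Sx l).
Proof.
have E : forall n, \big[Rplus/0]_(u : (l.+1).-tuple bool) \big[Rplus/0]_(v : (l.+1).-tuple bool)
     (INR (Qp l u v) * (INR (cntF x u n.-1) / INR n) * (INR (cntF x v n.-1) / INR n))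
     = INR (Ainf x l n) / INR (n * n).
  move=> n.
  rewrite Ainf_Qp pair_partition [X in X / INR (n * n)]INR_big divR_big; apply: eq_bigr => u _.
  rewrite [X in X / INR (n * n)]INR_big divR_big; apply: eq_bigr => v _.
  rewrite !INR_muln /Rdiv Rinv_mult; ring.
apply: is_lim_seq_ext E _.
apply: lim_bigR => u; apply: lim_bigR => v.
apply: is_lim_seq_mult'; last exact: cR_lim.
apply: is_lim_seq_mult'; [exact: is_lim_seq_const | exact: cR_lim].
Qed.


Lemma div_INR_nonneg a b : 0 <= INR a / INR b.
Proof.
case: b => [|b]; first by change (INR 0) with 0; rewrite /Rdiv Rinv_0 Rmult_0_r; lra.
apply: Rdiv_le_0_compat; [apply: pos_INR | apply: lt_0_INR; lia].
Qed.

Lemma Sx_nonneg l : 0 <= Sx l.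
Proof.
have := is_lim_seq_le (fun _ => 0) _ 0 (Sx l) (fun n => div_INR_nonneg (Ainf x l n) (n * n))
  (is_lim_seq_const 0) (A_lim (l:=l)).
by [].
Qed.

Lemma Sx_le l : (0 < l)%nat -> Sx l <= / INR l.
Proof.
move=> Hl.
have HlR : 0 < INR l by apply: lt_0_INR; apply/ltP.
pose v n := / INR l * ((1 + INR l * / INR n) * (1 + INR l * / INR n)).
have Hv : is_lim_seq v (/ INR l * ((1 + INR l * 0) * (1 + INR l * 0))).
  have L1 : is_lim_seq (fun n => 1 + INR l * / INR n) (1 + INR l * 0).
    apply: is_lim_seq_plus'; first exact: is_lim_seq_const.
    apply: is_lim_seq_mult'; [exact: is_lim_seq_const | exact: lim_inv_n].
  apply: is_lim_seq_mult'; first exact: is_lim_seq_const.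
  exact: (is_lim_seq_mult' _ _ _ _ L1 L1).
suff HH : Rbar_le (Sx l) (/ INR l * ((1 + INR l * 0) * (1 + INR l * 0))).
  by move: HH; rewrite /= !Rmult_0_r !Rplus_0_r !Rmult_1_r.
apply: (is_lim_seq_le_loc _ v _ _ _ (A_lim (l:=l)) Hv).
exists 1%nat => n /leP Hn.
have HnR : 0 < INR n by apply: lt_0_INR; apply/ltP.
have T := leR (tight x n l).
rewrite !INR_muln INR_addn in T.
rewrite /v INR_muln.
have -> : / INR l * ((1 + INR l * / INR n) * (1 + INR l * / INR n)) =
          ((INR n + INR l) * (INR n + INR l)) / (INR l * (INR n * INR n)) by field; lra.
have Hnn : 0 < INR n * INR n by nra.
apply/Rle_div_l => //.
have -> : (INR n + INR l) * (INR n + INR l) / (INR l * (INR n * INR n)) * (INR n * INR n)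
   = ((INR n + INR l) * (INR n + INR l)) * / INR l by field; lra.
have -> : INR (Ainf x l n) = (INR l * INR (Ainf x l n)) * / INR l by field; lra.
apply: Rmult_le_compat_r; [apply: Rlt_le; apply: Rinv_0_lt_compat; lra | lra].
Qed.

Definition dK l := Sx l - Sx l.+1.

Lemma Sx_tail l : is_lim_seq (fun N => Sx (l + N.+1)) 0.
Proof.
apply: (is_lim_seq_le_le (fun _ => 0) _ (fun N => / INR N.+1)); last exact: lim_inv_S.
  move=> N; split; first exact: Sx_nonneg.
  have HH : (0 < l + N.+1)%nat by lia.
  apply: Rle_trans (Sx_le HH) _.
  apply: Rinv_le_contravar; first by apply: lt_0_INR; lia.
  by apply: leR; lia.
exact: is_lim_seq_const.
Qed.

Lemma series_dK l : is_series (fun k => dK (l + k)) (Sx l).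
Proof.
apply: series_of_lim.
have E N : sum_n (fun k => dK (l + k)) N = Sx l - Sx (l + N.+1).
  rewrite (sum_n_ext _ (fun k => Sx (l + k) - Sx (l + k.+1))); first by rewrite tele addn0.
  by move=> k; rewrite /dK addnS.
apply: is_lim_seq_ext (fun N => esym (E N)) _.
have := is_lim_seq_minus' _ _ _ _ (is_lim_seq_const (Sx l)) (Sx_tail l).
by rewrite Rminus_0_r.
Qed.

Lemma density_lim l : is_lim_seq (density_K x l) (dK l).
Proof.
have E n : INR (Ainf x l n) / INR (n * n) - INR (Ainf x l.+1 n) / INR (n * n) = density_K x l n.
  rewrite /density_K density_count INR_subn.
    by rewrite /Rdiv Rmult_minus_distr_r.
  by apply: leq_sum => i _; apply: leq_sum => j _; apply: Tinf_le.
apply: is_lim_seq_ext E _.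
apply: is_lim_seq_minus'; exact: A_lim.
Qed.

Lemma Lambda_lim l : is_lim_seq (fun n => rqa_Lambda x n l) (Sx l).
Proof.
apply: is_lim_seq_ext (fun n => esym (Lambda_B x n l)) _.
apply: (lim_transfer (a := fun n => INR (Ainf x l n)) (C := 2 * (1 + INR l))); first exact: A_lim.
move=> n; have := B_close x n l.
by rewrite !INR_muln INR_addn /= Rmult_assoc [INR n * _]Rmult_comm -Rmult_assoc.
Qed.

Lemma lambda_lim l : is_lim_seq (fun n => rqa_lambda x n l) (dK l).
Proof.
apply: is_lim_seq_ext (fun n => esym (lambda_B x n l)) _.
apply: is_lim_seq_minus'.
  apply: (lim_transfer (a := fun n => INR (Ainf x l n)) (C := 2 * (1 + INR l))); first exact: A_lim.
  move=> n; have := B_close x n l.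
  by rewrite !INR_muln INR_addn /= Rmult_assoc [INR n * _]Rmult_comm -Rmult_assoc.
apply: (lim_transfer (a := fun n => INR (Ainf x l.+1 n)) (C := 2 * (1 + INR l.+1))); first exact: A_lim.
move=> n; have := B_close x n l.+1.
by rewrite !INR_muln INR_addn /= Rmult_assoc [INR n * _]Rmult_comm -Rmult_assoc.
Qed.

End Main.

Section Final.
Variables (z : subst) (q : nat) (x : nat -> bool).
Hypothesis Hq : 2 <= q.
Hypothesis Hcl : constant_length z q.
Hypothesis Hfp : is_fixed_point_limit z x.
Hypothesis Hp : subst_primitive z.

Local Open Scope R_scope.

Lemma wins_eq (i a L : nat) : wins x L i = wins x L a -> forall s, (s < L)%nat -> x (i + s) = x (a + s).
Proof.
move=> E s Hs.
have := congr1 (fun w => nth false w s) E.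
by rewrite /wins !nth_mkseq.
Qed.

Lemma inK_of l a b i j : x a != x b -> AG x l a.+1 b.+1 -> x (a.+1 + l) != x (b.+1 + l) ->
  (0 < i)%nat -> (0 < j)%nat -> wins x l.+2 i.-1 = wins x l.+2 a -> wins x l.+2 j.-1 = wins x l.+2 b ->
  in_K x l i j.
Proof.
move=> Hab HAG Hend Hi Hj Ei Ej.
have Xi := wins_eq Ei; have Xj := wins_eq Ej.
have Ii : forall s, (s < l.+2)%nat -> x (i.-1 + s) = x (a + s) by [].
have Ei0 : x i.-1 = x a by have := Xi 0%nat isT; rewrite !addn0.
have Ej0 : x j.-1 = x b by have := Xj 0%nat isT; rewrite !addn0.
have Eik k : (k < l.+1)%nat -> x (i + k) = x (a.+1 + k).
  move=> Hk; have := Xi k.+1 Hk; by rewrite !addnS -!addSn prednK.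
have Ejk k : (k < l.+1)%nat -> x (j + k) = x (b.+1 + k).
  move=> Hk; have := Xj k.+1 Hk; by rewrite !addnS -!addSn prednK.
rewrite /in_K Hi Hj /=.
apply/and4P; split.
- apply/eqP => Hij; move: Hab; by rewrite -Ei0 -Ej0 Hij eqxx.
- apply/allP => k; rewrite mem_iota add0n => /andP [_ Hk].
  by rewrite /rp Eik ?Ejk ?HAG // ltnW.
- by rewrite /rp Ei0 Ej0.
- by rewrite /rp Eik // Ejk.
Qed.

Lemma cnt_shift (w : seq bool) n :
  \sum_(i < n) ((0 < i)%nat && (wins x (size w) i.-1 == w) : nat) = cntF x w n.-1.
Proof.
case: n => [|m]; first by rewrite big_ord0 /cntF big_geq.
rewrite big_ord_recl /= add0n /cntF big_mkord.
by apply: eq_bigr => i _.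
Qed.


Lemma count_lower l a b n : x a != x b -> AG x l a.+1 b.+1 -> x (a.+1 + l) != x (b.+1 + l) ->
  (cntF x (wins x l.+2 a) n.-1 * cntF x (wins x l.+2 b) n.-1 <= \sum_(i < n) \sum_(j < n) in_K x l i j)%nat.
Proof.
move=> Hab HAG Hend.
have Su : size (wins x l.+2 a) = l.+2 by rewrite size_mkseq.
have Sv : size (wins x l.+2 b) = l.+2 by rewrite size_mkseq.
rewrite -!cnt_shift Su Sv big_distrl /=; apply: leq_sum => i _.
rewrite big_distrr /=; apply: leq_sum => j _.
case: (boolP ((0 < i)%nat && (wins x l.+2 i.-1 == wins x l.+2 a))) => [/andP [Hi /eqP Ei]|]; last by rewrite mul0n.
case: (boolP ((0 < j)%nat && (wins x l.+2 j.-1 == wins x l.+2 b))) => [/andP [Hj /eqP Ej]|]; last by rewrite muln0.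
by rewrite (inK_of Hab HAG Hend Hi Hj Ei Ej).
Qed.

Lemma inv_nonneg (r : R) : 0 <= r -> 0 <= / r.
Proof.
move=> Hr; case: (Req_dec r 0) => [->|H]; first by rewrite Rinv_0; lra.
apply: Rlt_le; apply: Rinv_0_lt_compat; lra.
Qed.

Lemma dK_nonneg l : 0 <= dK x l.
Proof.
have := is_lim_seq_le (fun _ => 0) _ 0 (dK x l) _ (is_lim_seq_const 0) (density_lim Hq Hcl Hfp Hp (l:=l)).
apply => n; rewrite /density_K; apply: Rmult_le_pos; [apply: pos_INR | apply: inv_nonneg; apply: pos_INR].
Qed.

Lemma dK_pos_of l a b : x a != x b -> AG x l a.+1 b.+1 -> x (a.+1 + l) != x (b.+1 + l) -> 0 < dK x l.
Proof.
move=> Hab HAG Hend.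
set u := wins x l.+2 a; set v := wins x l.+2 b.
have Hlim : is_lim_seq (fun n => (INR (cntF x u n.-1) / INR n) * (INR (cntF x v n.-1) / INR n)) (freq x u * freq x v).
  apply: is_lim_seq_mult'; exact: (cR_lim Hq Hcl Hfp Hp).
have Hle : Rbar_le (freq x u * freq x v) (dK x l).
  apply: (is_lim_seq_le _ _ _ _ _ Hlim (density_lim Hq Hcl Hfp Hp (l:=l))) => n.
  have -> : INR (cntF x u n.-1) / INR n * (INR (cntF x v n.-1) / INR n) =
            INR (cntF x u n.-1 * cntF x v n.-1) / INR (n * n).
    by rewrite !INR_muln /Rdiv Rinv_mult; ring.
  rewrite /density_K; apply: Rmult_le_compat_r; first by apply: inv_nonneg; apply: pos_INR.
  by apply: leR; apply: count_lower.
have Pu := freq_pos Hq Hcl Hfp Hp a l.+2.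
have Pv := freq_pos Hq Hcl Hfp Hp b l.+2.
rewrite /= in Hle.
have : 0 < freq x u * freq x v by apply: Rmult_lt_0_compat.
lra.
Qed.

Lemma Sx_mono l k : Sx x (l + k) <= Sx x l.
Proof.
elim: k => [|k IH]; first by rewrite addn0; lra.
have := dK_nonneg (l + k); rewrite /dK addnS; lra.
Qed.

End Final.

Unset Implicit Arguments.
Theorem proposition3p7 (z : subst) (q : nat) (x : nat -> bool) :
  (2 <= q)%N ->
  constant_length z q ->
  subst_primitive z ->
  subst_aperiodic z ->
  nth true (z false) 0 = false ->
  is_fixed_point_limit z x ->
  exists dK : nat -> R,
    (* dK l = d(K_l) *)
    (forall l : nat, (1 <= l)%N -> is_lim_seq (density_K x l) (dK l)) /\
    (forall l : nat, (1 <= l)%N ->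
       is_lim_seq (fun n => rqa_lambda x n l) (dK l) /\
       exists S : R,
         is_series (fun k => dK (l + k)%N) S /\
         is_lim_seq (fun n => rqa_Lambda x n l) S /\
         (0 < S)%R) /\
    (forall m : nat, exists l : nat, (m <= l)%N /\ (0 < dK l)%R).
Proof.
move=> Hq Hcl Hp Hap _ Hfp.
have Hnep := NEP_x Hq Hcl Hfp Hp Hap.
have Hpos : forall m : nat, exists l : nat, (m <= l)%N /\ (0 < dK x l)%R.
  move=> m.
  have [a [b [l [Hml [Hab [HAG Hend]]]]]] := bispecial Hnep m.
  exists l; split => //; exact: (dK_pos_of Hq Hcl Hfp Hp Hab HAG Hend).
exists (dK x); split; first by move=> l _; exact: (density_lim Hq Hcl Hfp Hp).
split => //.
move=> l _; split; first exact: (lambda_lim Hq Hcl Hfp Hp).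
exists (Sx x l); split; first exact: (series_dK Hq Hcl Hfp Hp).
split; first exact: (Lambda_lim Hq Hcl Hfp Hp).
have [l' [Hll' Hpos']] := Hpos l.
have Hmono := Sx_mono Hq Hcl Hfp Hp l (l' - l).
rewrite subnKC // in Hmono.
have := Sx_nonneg Hq Hcl Hfp Hp l'.+1.
rewrite /dK in Hpos'; lra.
Qed.
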